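(* Let $T\in(\mathbb{C}^n)^{\otimes3}$ be an $r$-diagonalisable symmetric tensor, $T=\sum_{i=1}^ru_i^{\otimes3}$ with $u_1,\dots,u_r$ linearly independent. Let $P\in\mathbb{C}^{n\times r}$ be a semi-unitary matrix whose columns span $\mathrm{span}\{u_1,\dots,u_r\}$, and let $T'=(\overline P\otimes\overline P\otimes\overline P).T\in(\mathbb{C}^r)^{\otimes3}$. Then $T'$ is diagonalisable and $\kappa(T)=\kappa(T')$.
   Context: A symmetric tensor is $r$-diagonalisable if it equals $\sum_{i=1}^r u_i^{\otimes3}$ with the $u_i$ linearly independent (diagonalisable when $r$ equals the ambient dimension). $\kappa(T)=\|U\|_F^2+\|U^\dagger\|_F^2$, where $U$ has rows $u_1,\dots,u_r$ and $U^\dagger$ is the Moore–Penrose pseudoinverse; this does not depend on the decomposition. $P$ semi-unitary means $P^*P=I_r$; $\overline P$ is the entrywise complex conjugate. For $A\in\mathbb{C}^{n\times r}$, $\big((A\otimes A\otimes A).T\big)_{i_1i_2i_3}=\sum_{j_1,j_2,j_3}A_{j_1i_1}A_{j_2i_2}A_{j_3i_3}T_{j_1j_2j_3}$, so $(\overline P\otimes\overline P\otimes\overline P).(u^{\otimes3})=(P^*u)^{\otimes3}$. *)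

(* Defs.v *)
(* Complex numbers are modelled as R[i] for R : realType
   (mathcomp-real-closed `complex`), which is (isomorphic to) C. *)
From mathcomp Require Import all_boot all_algebra.
From mathcomp Require Import reals.
From mathcomp.real_closed Require Export complex.
Set Implicit Arguments.
Unset Strict Implicit.
Unset Printing Implicit Defensive.
Import GRing.Theory Num.Theory.
Local Open Scope ring_scope.

Definition tensor3 (C : Type) (n : nat) := 'I_n -> 'I_n -> 'I_n -> C.

Section Defs.
Variable C : numClosedFieldType.

Definition ctmx (m n : nat) (A : 'M[C]_(m, n)) : 'M[C]_(n, m) :=
  (map_mx Num.conj A)^T.

Definition frob2 (m n : nat) (A : 'M[C]_(m, n)) : C :=
  \sum_(i < m) \sum_(j < n) `|A i j| ^+ 2.

Definition is_pinv (m n : nat) (A : 'M[C]_(m, n)) (X : 'M[C]_(n, m)) : Prop :=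
  [/\ A *m X *m A = A, X *m A *m X = X,
      ctmx (A *m X) = A *m X & ctmx (X *m A) = X *m A].

(* T = sum_i u_i^{(x)3}, u_i = i-th row of U *)
Definition cube_sum (r n : nat) (U : 'M[C]_(r, n)) : tensor3 C n :=
  fun a b c => \sum_(i < r) U i a * U i b * U i c.

Definition is_rdecomp (r n : nat) (T : tensor3 C n) (U : 'M[C]_(r, n)) : Prop :=
  row_free U /\ forall a b c, T a b c = cube_sum U a b c.

Definition r_diagonalisable (r n : nat) (T : tensor3 C n) : Prop :=
  exists U : 'M[C]_(r, n), is_rdecomp T U.

Definition diagonalisable (n : nat) (T : tensor3 C n) : Prop :=
  r_diagonalisable n T.

Definition tmul3 (n r : nat) (A : 'M[C]_(n, r)) (T : tensor3 C n) : tensor3 C r :=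
  fun i1 i2 i3 => \sum_(j1 < n) \sum_(j2 < n) \sum_(j3 < n)
    A j1 i1 * A j2 i2 * A j3 i3 * T j1 j2 j3.

(* kappa computed from a decomposition U and its pseudoinverse X *)
Definition kappa_of (r n : nat) (U : 'M[C]_(r, n)) (X : 'M[C]_(n, r)) : C :=
  frob2 U + frob2 X.

End Defs.

(* Main.v *)
Require Import Defs.
From mathcomp Require Import all_boot all_algebra.
From mathcomp Require Import reals ring.
From mathcomp.real_closed Require Import complex.
Import GRing.Theory Num.Theory.
Local Open Scope ring_scope.
Set Warnings "-notation-overridden,-ambiguous-paths".
Set Implicit Arguments.
Section S. Variable C : numClosedFieldType.
Implicit Types m n p : nat.

Lemma ctmx_mul m n p (A : 'M[C]_(m,n)) (B : 'M[C]_(n,p)) :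
  ctmx (A *m B) = ctmx B *m ctmx A.
Proof. by rewrite /ctmx map_mxM trmx_mul. Qed.

Lemma ctmxK m n (A : 'M[C]_(m,n)) : ctmx (ctmx A) = A.
Proof. by apply/matrixP => i j; rewrite !mxE conjCK. Qed.

Lemma ctmx1 n : ctmx (1%:M : 'M[C]_n) = 1%:M.
Proof. by apply/matrixP => i j; rewrite !mxE rmorph_nat eq_sym. Qed.

Lemma pinv_uniq m n (A : 'M[C]_(m,n)) X1 X2 : is_pinv A X1 -> is_pinv A X2 -> X1 = X2.
Proof.
case=> a1 b1 c1 d1 [a2 b2 c2 d2].
have e1 : ctmx A = ctmx A *m A *m X2.
  by rewrite -{1}a2 ctmx_mul c2 mulmxA.
have e2 : ctmx A = X1 *m A *m ctmx A.
  by rewrite -{1}a1 -mulmxA ctmx_mul d1.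
have f1 : X1 = X1 *m A *m X2.
  rewrite -{1}b1 -mulmxA -c1 ctmx_mul e1 !mulmxA.
  by rewrite -[X1 *m ctmx X1 *m ctmx A]mulmxA -ctmx_mul c1 mulmxA b1.
have f2 : X2 = X1 *m A *m X2.
  rewrite -{1}b2 -d2 ctmx_mul e2.
  rewrite -[X1 *m A *m ctmx A *m ctmx X2]mulmxA -ctmx_mul d2.
  by rewrite -!mulmxA [X2 *m (A *m X2)]mulmxA b2.
by rewrite f1 -f2.
Qed.
Lemma cube_sum_mul r n p (U : 'M[C]_(r,n)) (M : 'M[C]_(n,p)) a b c :
  cube_sum (U *m M) a b c = tmul3 M (cube_sum U) a b c.
Proof.
rewrite /cube_sum /tmul3; symmetry.
under eq_bigr => j1 _ do under eq_bigr => j2 _ do under eq_bigr => j3 _ do rewrite mulr_sumr.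
under eq_bigr => j1 _ do under eq_bigr => j2 _ do rewrite exchange_big.
under eq_bigr => j1 _ do rewrite exchange_big.
rewrite exchange_big; symmetry; apply: eq_bigr => i _ /=.
rewrite !mxE !mulr_suml; apply: eq_bigr => j1 _.
rewrite mulr_sumr [RHS]exchange_big; apply: eq_bigr => j3 _.
rewrite mulr_sumr mulr_suml; apply: eq_bigr => j2 _.
ring.
Qed.

Lemma frob2_tr m n (A : 'M[C]_(m,n)) : frob2 A = \tr (A *m ctmx A).
Proof.
rewrite /frob2 /mxtrace; apply: eq_bigr => i _; rewrite mxE.
by apply: eq_bigr => j _; rewrite !mxE normCK.
Qed.

Lemma frob2_mulr m n p (B : 'M[C]_(m,n)) (Y : 'M[C]_(n,p)) :
  Y *m ctmx Y = 1%:M -> frob2 (B *m Y) = frob2 B.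
Proof.
by move=> HY; rewrite !frob2_tr ctmx_mul mulmxA -(mulmxA B) HY mulmx1.
Qed.

Lemma frob2_mull m n p (Z : 'M[C]_(p,m)) (A : 'M[C]_(m,n)) :
  ctmx Z *m Z = 1%:M -> frob2 (Z *m A) = frob2 A.
Proof.
move=> HZ; rewrite !frob2_tr ctmx_mul mxtrace_mulC !mulmxA -(mulmxA (ctmx A)) HZ.
by rewrite mulmx1 mxtrace_mulC.
Qed.

Lemma cube_sum1 n (a b c : 'I_n) :
  cube_sum (1%:M : 'M[C]_n) a b c = ((a == b) && (a == c))%:R.
Proof.
rewrite /cube_sum (bigD1 a) //= big1 => [|i ia]; rewrite !mxE.
  by rewrite eqxx mul1r addr0; case: (a == b); case: (a == c); rewrite /= ?mul1r ?mul0r ?mulr0.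
by rewrite (negbTE ia) !mul0r.
Qed.

Lemma cube_unitary r (V : 'M[C]_r) : V \in unitmx ->
  (forall a b c, cube_sum V a b c = ((a == b) && (a == c))%:R) ->
  V *m ctmx V = 1%:M.
Proof.
move=> Vu HV.
set W := invmx V.
have VW : forall i k, \sum_a V i a * W a k = (i == k)%:R.
  by move=> i k; have /matrixP/(_ i k) := mulmxV Vu; rewrite !mxE.
have h1 : forall k b c, V k b * V k c = (b == c)%:R * W b k.
  move=> k b c.
  transitivity (\sum_a W a k * cube_sum V a b c).
    rewrite /cube_sum.
    under eq_bigr do rewrite mulr_sumr.
    rewrite exchange_big /=.
    transitivity (\sum_i (\sum_a V i a * W a k) * (V i b * V i c)).
      rewrite [RHS](bigD1 k) //= VW eqxx mul1r [X in _ + X]big1 ?addr0 // => i ik.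
      by rewrite VW (negbTE ik) mul0r.
    apply: eq_bigr => i _; rewrite mulr_suml; apply: eq_bigr => a _; ring.
  under eq_bigr do rewrite HV.
  rewrite (bigD1 b) //= big1 => [|a ab]; last by rewrite (negbTE ab) mulr0.
  by rewrite eqxx /= addr0 mulrC.
have h2 : forall k l, \sum_b V k b * (V l b * V l b) = (k == l)%:R.
  move=> k l; rewrite -VW; apply: eq_bigr => b _; by rewrite h1 eqxx mul1r.
have h3 : forall k b c, b != c -> V k b * V k c = 0.
  by move=> k b c bc; rewrite h1 (negbTE bc) mul0r.
have hoff : forall k l b, k != l -> V k b * V l b = 0.
  move=> k l b kl; apply/eqP; apply: contraT => nz.
  have := h2 k l; rewrite (negbTE kl) (bigD1 b) //= big1 => [|b' b'b].
    rewrite addr0 mulrA => /eqP; rewrite mulf_eq0 (negbTE nz) /=.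
    by move: nz; rewrite mulf_eq0 negb_or => /andP[_ /negbTE ->].
  move: nz; rewrite mulf_eq0 negb_or => /andP[nzk _].
  have := h3 k b b'; rewrite eq_sym b'b => /(_ isT) /eqP; rewrite mulf_eq0 (negbTE nzk) /=.
  by move/eqP ->; rewrite mul0r.
have hdiag : forall k, \sum_b `|V k b| ^+ 2 = 1.
  move=> k; have e := h2 k k; rewrite eqxx in e.
  case: (pickP (fun b => V k b != 0)) => [b0 nz | none]; last first.
    move: e; rewrite big1 => [|b _]; last by have := none b; move/negbFE/eqP ->; rewrite mul0r.
    by move/eqP; rewrite eq_sym oner_eq0.
  have z : forall b, b != b0 -> V k b = 0.
    move=> b bb0; have := h3 k b0 b; rewrite eq_sym bb0 => /(_ isT) /eqP.
    by rewrite mulf_eq0 (negbTE nz) /= => /eqP.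
  move: e; rewrite (bigD1 b0) //= big1 => [|b bb]; last by rewrite z // mul0r.
  rewrite (bigD1 b0) //= big1 => [|b bb]; last by rewrite z // normr0 expr0n.
  rewrite !addr0 => e.
  have : `|V k b0| ^+ 3 == 1 by rewrite -normrX exprS expr2 e normr1.
  by rewrite pexpr_eq1 // => /eqP ->; rewrite expr1n.
apply/matrixP => k l; rewrite !mxE.
case: (eqVneq k l) => [<-| kl].
  by rewrite -(hdiag k); apply: eq_bigr => b _; rewrite !mxE normCK.
apply: big1 => b _; rewrite !mxE.
have := hoff k l b kl; move/eqP; rewrite mulf_eq0 => /orP [] /eqP ->.
  by rewrite mul0r.
by rewrite conjC0 mulr0.
Qed.


Lemma pinv_right m n (A : 'M[C]_(m,n)) X :
  A *m X = 1%:M -> ctmx (X *m A) = X *m A -> is_pinv A X.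
Proof.
move=> AX XA; split => //; first by rewrite AX mul1mx.
  by rewrite -mulmxA AX mulmx1.
by rewrite AX ctmx1.
Qed.

End S.

Theorem theorem5p4 (R : realType) (n r : nat)
    (T : tensor3 R[i] n) (U : 'M[R[i]]_(r, n)) (P : 'M[R[i]]_(n, r)) :
  is_rdecomp T U ->
  ctmx P *m P = 1%:M ->
  (P^T :=: U)%MS ->
  let T' := tmul3 (map_mx Num.conj P) T in
  diagonalisable T' /\
  (forall (X : 'M[R[i]]_(n, r)) (U' : 'M[R[i]]_(r, r)) (X' : 'M[R[i]]_(r, r)),
     is_pinv U X -> is_rdecomp T' U' -> is_pinv U' X' ->
     kappa_of U X = kappa_of U' X').
Proof.
move=> [Ufree HT] HP eqPU T'.
set Y := P^T.
have ctY : ctmx Y = map_mx Num.conj P by apply/matrixP => i j; rewrite !mxE.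
have YY : Y *m ctmx Y = 1%:M.
  have := congr1 trmx HP; rewrite trmx_mul /ctmx trmxK trmx1 => <-.
  by rewrite -/(ctmx Y) ctY.
have UsubY : (U <= Y)%MS by rewrite /Y eqPU submx_refl.
set B := U *m map_mx Num.conj P.
have UB : U = B *m Y.
  have hK := mulmxKpV UsubY.
  by rewrite /B -ctY -{1 2}hK -(mulmxA _ Y) YY mulmx1 hK.
have Bu : B \in unitmx.
  rewrite -row_free_unit /row_free eqn_leq rank_leq_row /=.
  by move: Ufree; rewrite /row_free => /eqP {1}<-; rewrite UB mxrankM_maxl.
have T'B : forall a b c, T' a b c = cube_sum B a b c.
  move=> a b c; rewrite /B cube_sum_mul /T' /tmul3.
  apply: eq_bigr => j1 _; apply: eq_bigr => j2 _; apply: eq_bigr => j3 _.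
  by rewrite HT.
split.
  by exists B; split => //; rewrite row_free_unit.
move=> X U' X' pX [U'free HU'] pX'.
have pX0 : is_pinv U (ctmx Y *m invmx B).
  apply: pinv_right.
    by rewrite UB mulmxA -(mulmxA B) YY mulmx1 mulmxV.
  by rewrite UB mulmxA -(mulmxA (ctmx Y)) mulVmx // mulmx1 ctmx_mul ctmxK.
rewrite -(pinv_uniq pX0 pX).
have U'u : U' \in unitmx by rewrite -row_free_unit.
set V := U' *m invmx B.
have Vu : V \in unitmx by rewrite unitmx_mul U'u unitmx_inv.
have HV : forall a b c, cube_sum V a b c = ((a == b) && (a == c))%:R.
  move=> a b c; rewrite cube_sum_mul -((@cube_sum1 R[i])) -(mulmxV Bu) cube_sum_mul.
  rewrite /tmul3; apply: eq_bigr => j1 _; apply: eq_bigr => j2 _; apply: eq_bigr => j3 _.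
  by rewrite -HU' T'B.
have VV := cube_unitary Vu HV.
have U'V : U' = V *m B by rewrite /V mulmxKV.
have pX1 : is_pinv U' (invmx B *m ctmx V).
  apply: pinv_right.
    by rewrite U'V mulmxA -(mulmxA V) mulmxV // mulmx1 VV.
  have -> : invmx B *m ctmx V *m U' = 1%:M.
    by rewrite U'V mulmxA -(mulmxA (invmx B)) (mulmx1C VV) mulmx1 mulVmx.
  by rewrite ctmx1.
rewrite -(pinv_uniq pX1 pX') /kappa_of.
have VV' := mulmx1C VV.
rewrite UB (frob2_mulr B YY) (frob2_mull (invmx B) (Z := ctmx Y)); last by rewrite ctmxK.
rewrite U'V (frob2_mull B VV') (frob2_mulr (invmx B) (Y := ctmx V)) //.
by rewrite ctmxK.
Qed.
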